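(* For every $\alpha>0$ there exist a constant $c_0>0$ and infinitely many positive integers $n$ such that for each of them there is a real polynomial $P_n$ of degree $n$ satisfying: (1) $|P_n(x)|\le 1$ for $|x|\le1$, and $P_n(1)=P_n(-1)=1$; (2) $|P_n(x)|\le n^{-6}$ for $|x|\le 1-n^{-(2-\alpha)}$; (3) $P_n(x)\ge c_0$ for $1-n^{-2}\le|x|\le1$. *)

(* Defs.v *)
From HB Require Import structures.
From mathcomp Require Import all_boot all_order all_algebra.
From mathcomp Require Import all_classical all_reals all_analysis.

(* Main.v *)
Require Import Defs.
Set Warnings "-notation-overridden,-ambiguous-paths,-notation-incompatible-prefix".
From HB Require Import structures.
From mathcomp Require Import all_boot all_order all_algebra.
From mathcomp Require Import all_classical all_reals all_analysis.
From mathcomp Require Import ring lra zify.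
Import Order.TTheory GRing.Theory Num.Theory.
Local Open Scope ring_scope.
Set Implicit Arguments. Unset Strict Implicit.

Section H.
Variable R : realType.
Definition hh (t : R) := (t + t^-1) / 2.
Fixpoint FF (j : nat) (y : R) : R :=
  match j with 0%N => y | j.+1 => 2 * FF j y ^+ 2 - 1 end.
Fixpoint pp (c : R) (j : nat) : {poly R} :=
  match j with 0%N => c *: 'X | j.+1 => 2%:R *: (pp c j * pp c j) - 1 end.

Lemma pp_horner c j x : (pp c j).[x] = FF j (c * x).
Proof.
elim: j => [|j IH] /=; first by rewrite hornerZ hornerX.
by rewrite hornerD hornerN hornerZ hornerM IH hornerC expr2.
Qed.

Lemma pp_size c j : c != 0 -> size (pp c j) = (2 ^ j).+1.
Proof.
move=> c0; elim: j => [|j IH] /=; first by rewrite size_scale // size_polyX.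
have p0 : pp c j != 0 by rewrite -size_poly_eq0 IH.
rewrite size_polyDl size_scale ?pnatr_eq0 // ?size_mul // IH.
  by rewrite expnS; apply/eqP; rewrite -eqSS; lia.
by rewrite size_polyN size_poly1; lia.
Qed.

Lemma FF_hh j t : 0 < t -> FF j (hh t) = hh (t ^+ (2 ^ j)).
Proof.
move=> t0; elim: j => [|j IH] /=; first by rewrite expr1.
rewrite IH expnS mulnC exprM /hh.
have u0 : t ^+ (2 ^ j) != 0 by rewrite expf_neq0 // gt_eqF.
set u := t ^+ (2 ^ j). rewrite !expr2 invfM. field. by [].
Qed.

Lemma FF_bound j y a : 1 <= a -> `|y| <= a -> `|FF j y| <= FF j a /\ 1 <= FF j a.
Proof.
move=> a1 ya; elim: j => [|j [IH1 IH2]] //=.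
have := IH1; rewrite ler_norml => /andP[h1 h2].
have hsq : FF j y ^+ 2 <= FF j a ^+ 2.
  have : 0 <= (FF j a - FF j y) * (FF j a + FF j y) by apply: mulr_ge0; lra.
  rewrite !expr2; lra.
split; last by nra.
rewrite ler_norml; apply/andP; split; nra.
Qed.

Lemma FF_mono j y z : 1 <= y -> y <= z -> FF j y <= FF j z /\ 1 <= FF j y.
Proof.
move=> y1 yz; elim: j => [|j [IH1 IH2]] //=; split; nra.
Qed.

Lemma FF_even j y : FF j.+1 (- y) = FF j.+1 y.
Proof.
elim: j => [|j IH]; first by rewrite /= sqrrN.
by change (2 * FF j.+1 (- y) ^+ 2 - 1 = 2 * FF j.+1 y ^+ 2 - 1); rewrite IH.
Qed.

Lemma FF1 j : FF j 1 = 1.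
Proof. by elim: j => [|j IH] //=; rewrite IH; lra. Qed.

Lemma bern_up (g : R) m : 0 <= g -> 1 + m%:R * g <= (1 + g) ^+ m.
Proof.
move=> g0; elim: m => [|m IH]; first by rewrite mul0r addr0 expr0.
rewrite exprS -natr1; have h : 0 <= m%:R * g by rewrite mulr_ge0.
have : 1 <= (1+g)^+m by apply: exprn_ege1; lra.
nra.
Qed.

Lemma bern_dn (d : R) m : 0 <= d <= 1 -> 1 - m%:R * d <= (1 - d) ^+ m.
Proof.
move=> /andP[d0 d1]; elim: m => [|m IH]; first by rewrite mul0r subr0 expr0.
rewrite exprS -natr1; have h : 0 <= m%:R * d by rewrite mulr_ge0.
have : 0 <= (1-d)^+m by apply: exprn_ge0; lra.
nra.
Qed.

Lemma FF_evenP j y : (0 < j)%N -> FF j (- y) = FF j y.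
Proof. by case: j => // j _; apply: FF_even. Qed.

Lemma hh_ge1 t : 0 < t -> 1 <= hh t.
Proof.
move=> t0; rewrite /hh; have ht : t * t^-1 = 1 by rewrite mulfV ?gt_eqF.
have u0 : 0 < t^-1 by rewrite invr_gt0.
have : 0 <= (t - t^-1) ^+ 2 by apply: sqr_ge0.
rewrite expr2; nra.
Qed.

Lemma hh_ge t : 0 < t -> t / 2 <= hh t.
Proof. move=> t0; rewrite /hh; have : 0 < t^-1 by rewrite invr_gt0. lra. Qed.

Lemma hh_le t : 1 <= t -> hh t <= t.
Proof.
move=> t1; rewrite /hh; have : t^-1 <= 1 by rewrite invf_le1 // (lt_le_trans _ t1).
lra.
Qed.

Lemma hh_le2 g : 0 < g -> hh (1 + g) <= 1 + g ^+ 2 / 2.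
Proof.
move=> g0; rewrite /hh; set a := (1+g)^-1.
have ha : (1+g) * a = 1 by rewrite mulfV // gt_eqF //; lra.
have a0 : 0 < a by rewrite invr_gt0; lra.
rewrite expr2; nra.
Qed.

Lemma key_h g d : 0 < g <= 1 -> 0 < d -> 16 * d <= g ->
  1 <= (1 + g) * (1 - d) /\ hh ((1 + g) * (1 - d)) <= hh (1 + g) * (1 - 4 * d ^+ 2).
Proof.
move=> /andP[g0 g1] d0 hd.
set s := 1 + g; set r := s * (1 - d).
have r1 : 1 <= r by rewrite /r /s; nra.
split => //.
have hs : hh s <= s by apply: hh_le; rewrite /s; lra.
have hs1 : 1 <= hh s by apply: hh_ge1; rewrite /s; lra.
rewrite /hh; set a := s^-1; set b := r^-1.
have ha : s * a = 1 by rewrite mulfV // gt_eqF // /s; lra.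
have hb : r * b = 1 by rewrite mulfV // gt_eqF //; lra.
have a0 : 0 < a by rewrite invr_gt0 /s; lra.
have b1 : b <= 1 by rewrite invf_le1 // (lt_le_trans _ r1).
have b0 : 0 < b by rewrite invr_gt0 (lt_le_trans _ r1).
have hab : a - b = (r - s) * a * b.
  have s0 : s != 0 by rewrite gt_eqF // /s; lra.
  have r0 : r != 0 by rewrite gt_eqF //; lra.
  by rewrite /a /b; field; rewrite ?s0 ?r0; split.
have hrs : s - r = s * d by rewrite /r; ring.
have e1 : (s + a) / 2 - (r + b) / 2 = (s - r) * (1 - a * b) / 2.
  have -> : (s + a) / 2 - (r + b) / 2 = ((s - r) + (a - b)) / 2 by ring.
  rewrite hab; ring.
have e2 : 1 - a * b >= g * a.
  have : 1 - a = g * a by rewrite -ha /s; ring.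
  nra.
have e3 : (s - r) * (1 - a * b) >= d * g.
  rewrite hrs; have : s * d * (g * a) = d * g by rewrite -[RHS]mulr1 -ha; ring.
  have : 0 <= s * d by rewrite mulr_ge0 // /s; lra.
  nra.
have hhs : (s + a) / 2 = hh s by [].
suff : (s + a) / 2 - (r + b) / 2 >= 4 * d ^+ 2 * hh s.
  rewrite hhs; lra.
rewrite e1.
have : 4 * d ^+ 2 * hh s <= 8 * d ^+ 2.
  have : 0 <= d ^+ 2 by apply: sqr_ge0.
  have : s <= 2 by rewrite /s; lra.
  nra.
rewrite expr2; nra.
Qed.

Lemma L_hcd (c g2 del : R) : 1 <= c -> c <= 1 + g2 / 2 -> 0 <= g2 -> g2 <= del ->
  c * (1 - del) <= 1.
Proof.
move=> c1 cg g0 gd; have [hd|hd] := leP 1 del.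
  have : 0 <= c * (del - 1) by apply: mulr_ge0; lra.
  rewrite mulrBr mulr1 mulrBr mulr1; lra.
have h1 : c * (1 - del) <= (1 + g2 / 2) * (1 - del) by apply: ler_wpM2r; lra.
have : 0 <= g2 * del by apply: mulr_ge0; lra.
move: h1; rewrite !mulrBr !mulr1 mulrDl mul1r; lra.
Qed.

Lemma L_cx (c x b : R) : 0 < c -> `|x| <= b -> c * b <= 1 -> `|c * x| <= 1.
Proof.
move=> c0 xb cb; rewrite normrM (gtr0_norm c0); apply: le_trans cb.
by apply: ler_wpM2l => //; apply: ltW.
Qed.

Lemma L_fin (F Hh rn H sn e : R) : Hh <= F -> rn / 2 <= Hh -> rn = sn * e ->
  1 / 2 <= e -> H <= sn -> 0 <= sn -> 1 / 4 * H <= F.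
Proof.
move=> h1 h2 h3 h4 h5 h6.
have : sn * (1 / 2) <= sn * e by apply: ler_wpM2l.
rewrite -h3; lra.
Qed.

Lemma L_small (F Hi m : R) : `|F| <= 1 -> 0 < Hi -> Hi <= m -> `|F| * Hi <= m.
Proof.
move=> h1 h2 h3; apply: le_trans h3.
by rewrite -[X in _ <= X]mul1r; apply: ler_wpM2r => //; apply: ltW.
Qed.

Lemma L_hry (hr c w y : R) : 0 < c -> hr <= c * (1 - w) -> 1 - w <= y -> hr <= c * y.
Proof.
move=> c0 h1 h2; apply: (le_trans h1); apply: ler_wpM2l => //; exact: ltW.
Qed.

Lemma L_16 (A g B d : R) : 0 < A -> 0 < g -> 0 < d -> A * g = 1 -> (2 * B) * d = 1 ->
  16 * A <= B -> 16 * d <= g.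
Proof.
move=> A0 g0 d0 hA hB hAB.
have : 16 * A * (g * d) <= B * (g * d) by apply: ler_wpM2r => //; apply: mulr_ge0; lra.
have -> : 16 * A * (g * d) = 16 * d * (A * g) by ring.
have -> : B * (g * d) = g * (2 * B * d) / 2 by field.
rewrite hA hB; lra.
Qed.
End H.

Lemma sq_le_pow2 t : (4 <= t)%N -> (t * t <= 2 ^ t)%N.
Proof.
elim: t => // t IH; rewrite leq_eqVlt => /orP[/eqP <- //|].
rewrite ltnS => /[dup] t4 /IH h; rewrite expnS; nia.
Qed.


Theorem lemma4p2 (R : realType) (alpha : R) (halpha : 0 < alpha) :
  exists c0 : R, 0 < c0 /\
  forall N : nat, exists n : nat, (N < n)%N /\
    exists P : {poly R},
      size P = n.+1 /\
      (forall x : R, `|x| <= 1 -> `|P.[x]| <= 1) /\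
      P.[1] = 1 /\ P.[-1] = 1 /\
      (forall x : R, `|x| <= 1 - (n%:R) `^ (alpha - 2) ->
         `|P.[x]| <= (n%:R ^+ 6)^-1) /\
      (forall x : R, 1 - (n%:R ^+ 2)^-1 <= `|x| <= 1 -> c0 <= P.[x]).
Proof.
set q := (Num.truncn alpha^-1).+1.
have hq : (q%:R)^-1 <= alpha.
  have h1 := truncnS_gt alpha^-1.
  have q0 : (0 : R) < q%:R by rewrite ltr0n.
  rewrite -(ler_pM2r q0) mulVf ?gt_eqF //.
  have : alpha * alpha^-1 < alpha * q%:R by rewrite ltr_pM2l.
  by rewrite mulfV ?gt_eqF // mulrC => /ltW.
exists (1/4); split; first lra.
move=> N.
set t := (N + 12 * q + 4)%N.
set k := (2 * q * t)%N.
set j := (k - t)%N.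
set n := (2 ^ k)%N.
have q1 : (1 <= q)%N by [].
have tk : (t <= k)%N by rewrite /k; nia.
have kjt : k = (j + t)%N by rewrite /j subnK.
have j4 : (j + 4 <= k)%N by rewrite /j /k /t; nia.
have k0 : (0 < k)%N by rewrite /k /t; nia.
have hNn : (N < n)%N.
  by apply: (leq_ltn_trans _ (ltn_expl k (isT : (1 < 2)%N))); rewrite /k /t; nia.
have h6 : (6 * k + 1 <= 2 ^ t)%N.
  have hsq : (t * t <= 2 ^ t)%N by apply: sq_le_pow2; rewrite /t; lia.
  apply: leq_trans hsq; rewrite /k /t; nia.
exists n; split => //.
set g : R := (2%:R ^+ j)^-1.
set s : R := 1 + g.
set c : R := hh s.
set H : R := hh (s ^+ n).
have p2j : 1 <= (2%:R : R) ^+ j by apply: exprn_ege1; lra.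
have g0 : 0 < g by rewrite invr_gt0; lra.
have g1 : g <= 1 by rewrite invf_le1 //; lra.
have s1 : 1 <= s by rewrite /s; lra.
have c1 : 1 <= c by apply: hh_ge1; lra.
have sn1 : 1 <= s ^+ n by apply: exprn_ege1.
have HsH : s ^+ n / 2 <= H by apply: hh_ge; lra.
have H0 : 0 < H by lra.
have FFc : FF k c = H by rewrite /c /H FF_hh //; lra.
have nR : (n%:R : R) = 2%:R ^+ k by rewrite natrX.
have sj : 2 <= s ^+ (2 ^ j).
  have := bern_up (2 ^ j) (ltW g0); rewrite natrX /g mulfV; last by rewrite gt_eqF //; lra.
  by [] .
have sn_big : 2 * (n%:R ^+ 6) <= s ^+ n.
  have -> : s ^+ n = (s ^+ (2 ^ j)) ^+ (2 ^ t) by rewrite -exprM -expnD -kjt.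
  apply: (le_trans _ (lerXn2r _ _ _ sj)); last 2 first.
    by rewrite nnegrE; lra.
    by rewrite nnegrE; lra.
  rewrite nR -exprM -exprS ler_eXn2l; last lra.
  by rewrite mulnC -addn1.
have Hn6 : n%:R ^+ 6 <= H.
  have : 0 <= (n%:R : R) ^+ 6 by apply: exprn_ge0; apply: ler0n.
  lra.
set P := H^-1 *: pp c k.
have Px x : P.[x] = FF k (c * x) / H by rewrite /P hornerZ pp_horner mulrC.
have Peven x : P.[- x] = P.[x] by rewrite !Px mulrN FF_evenP.
have c0 : 0 < c by lra.
exists P; split.
  by rewrite /P size_scale ?pp_size // ?gt_eqF // invr_gt0.
split.
  move=> x hx; rewrite Px normrM normfV (gtr0_norm H0) ler_pdivrMr // mul1r.
  have hc : `|c * x| <= c by rewrite normrM (gtr0_norm c0); nra.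
  by have [h _] := FF_bound k c1 hc; rewrite -FFc.
have P1 : P.[1] = 1 by rewrite Px mulr1 FFc mulfV ?gt_eqF.
split => //.
split; first by rewrite Peven.
have n1 : 1 <= (n%:R : R) by rewrite ler1n expn_gt0.
have n0 : 0 < (n%:R : R) by lra.
split.
  move=> x hx.
  have hdel : g ^+ 2 <= n%:R `^ (alpha - 2).
    have e : q%:R^-1 - 2 <= alpha - 2 by lra.
    apply: le_trans (ler_powR n1 e).
    rewrite nR -(@powR_mulrn R 2 k); last lra.
    rewrite -powRrM.
    have ek : (k%:R : R) = 2 * q%:R * t%:R by rewrite /k !natrM.
    have ej : (j%:R : R) = k%:R - t%:R by rewrite /j natrB.
    have q0 : (q%:R : R) != 0 by rewrite pnatr_eq0.
    have -> : (k%:R : R) * (q%:R^-1 - 2) = - (2 * j)%:R.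
      by rewrite natrM ej ek; field.
    rewrite powRN powR_mulrn; last lra.
    by rewrite /g exprVn -exprM mulnC.
  have hcg := hh_le2 g0; rewrite -/s -/c in hcg.
  set del := n%:R `^ (alpha - 2) in hx hdel.
  have hg2 : 0 <= g ^+ 2 by apply: sqr_ge0.
  have hcd : c * (1 - del) <= 1 := L_hcd c1 hcg hg2 hdel.
  have hcx : `|c * x| <= 1 by apply: L_cx hx hcd.
  have [hF _] := FF_bound k (lexx 1) hcx; rewrite FF1 in hF.
  rewrite Px normrM normfV (gtr0_norm H0).
  have hHi : H^-1 <= (n%:R ^+ 6)^-1.
    rewrite lef_pV2 ?posrE //; apply: exprn_gt0; lra.
  by apply: L_small => //; rewrite invr_gt0.
move=> x /andP[hx1 hx2].
have -> : P.[x] = P.[`|x|].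
  by have [/ger0_norm->|/ltW/ler0_norm->] := leP 0 x; rewrite ?Peven.
set y := `|x| in hx1 hx2 *.
set d : R := (2 * n%:R)^-1.
have d0 : 0 < d by rewrite invr_gt0; lra.
have hd16 : 16 * d <= g.
  have hN : (2 ^ (4 + j) <= 2 ^ k)%N by rewrite leq_exp2l // addnC.
  rewrite expnD in hN.
  have hR : 16 * (2%:R ^+ j : R) <= 2%:R ^+ k.
    by rewrite -!natrX -(natrM R 16) ler_nat.
  set A := (2%:R ^+ j : R) in hR g0 g1 p2j.
  have hA : A * g = 1 by rewrite /g mulfV //; rewrite gt_eqF //; lra.
  have hB : (2 * n%:R) * d = 1 by rewrite /d mulfV //; rewrite gt_eqF //; lra.
  rewrite nR in hB.
  by apply: L_16 hA hB hR => //; lra.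
have hg1 : 0 < g <= 1 by rewrite g0 g1.
have [r1 hr] := key_h hg1 d0 hd16.
rewrite -/s -/c in r1 hr.
set r := s * (1 - d) in r1 hr.
have e4 : 4 * d ^+ 2 = (n%:R ^+ 2)^-1.
  by rewrite /d; field; rewrite gt_eqF.
rewrite e4 in hr.
have hry : hh r <= c * y by apply: L_hry hr hx1.
have r0 : 0 < r by lra.
have [hm _] := FF_mono k (hh_ge1 r0) hry.
rewrite FF_hh // -/n in hm.
have hrn := hh_ge (exprn_gt0 n r0).
have hdn : 1 / 2 <= (1 - d) ^+ n.
  have hd1 : 0 <= d <= 1 by apply/andP; split; lra.
  have := bern_dn n hd1.
  have -> : (n%:R : R) * d = 1 / 2 by rewrite /d; field; rewrite gt_eqF.
  lra.
have hrn2 : r ^+ n = s ^+ n * (1 - d) ^+ n by rewrite /r exprMn.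
have hHs : H <= s ^+ n by apply: hh_le.
rewrite Px ler_pdivlMr //.
by apply: L_fin hm hrn hrn2 hdn hHs _; lra.
Qed.
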